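(* Let $K$ be a finite field and let $d$ be an integer with $\gcd(d,|K|-1)=1$. For every $b\in K$ with $b\neq 1$, $$\sum_{a\in K^\times}W_{K,d}(a)\,W_{K,d}(ba)=0.$$
   Context: Let $p$ be the characteristic of $K$. $\psi_K(x)=\exp(2\pi i\,\mathrm{Tr}_{K/\mathbb{F}_p}(x)/p)$ and $W_{K,d}(a)=\sum_{x\in K}\psi_K(x^d+ax)$ for $a\in K$. *)

(* Defs.v *)
From HB Require Import structures.
From mathcomp Require Import all_boot all_order all_algebra all_field.
Set Implicit Arguments. Unset Strict Implicit. Unset Printing Implicit Defensive.
Import GRing.Theory Num.Theory.
Local Open Scope ring_scope.

(* characteristic p of the finite field K (|K| = p^n with p prime) *)
Definition fchar (K : finFieldType) : nat := pdiv #|K|.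
Definition fdeg (K : finFieldType) : nat := logn (fchar K) #|K|.

(* absolute trace Tr_{K/F_p}(x) = x + x^p + ... + x^(p^(n-1)), an element of
   the prime subfield of K *)
Definition ftrace (K : finFieldType) (x : K) : K :=
  \sum_(i < fdeg K) x ^+ (fchar K ^ i).

Definition prime_rep (K : finFieldType) (t : K) : nat :=
  if [pick k : 'I_(fchar K) | (k%:R : K) == t] is Some k then val k else 0%N.

(* exp(2 pi i / p) in the algebraic complex numbers: the p-th root of -1 with
   minimal nonnegative argument is exp(i pi / p); square it *)
Definition zeta (p : nat) : algC := (p.-root (-1)) ^+ 2.

Definition psiK (K : finFieldType) (x : K) : algC :=
  zeta (fchar K) ^+ prime_rep (ftrace x).

Definition WKd (K : finFieldType) (d : nat) (a : K) : algC :=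
  \sum_(x : K) psiK (x ^+ d + a * x).

(* Main.v *)
Set Warnings "-notation-overridden,-ambiguous-paths".
Require Import Defs.
From HB Require Import structures.
From mathcomp Require Import all_boot all_order all_algebra all_field.
Import GRing.Theory Num.Theory.
Local Open Scope ring_scope.
Set Implicit Arguments. Unset Strict Implicit.

Lemma fchar_facts (K : finFieldType) :
  [/\ prime (fchar K), fchar K \in [pchar K] & #|K| = (fchar K ^ fdeg K)%N].
Proof.
have [p pr pc] := finPcharP K.
have hq : #|K| = (p ^ logn p #|K|)%N := card_pprimeChar pc.
have n_gt0 : (0 < logn p #|K|)%N.
  case: (logn p #|K|) hq => // /= h; have := finNzRing_gt1 K; by rewrite h.
have hp : fchar K = p by rewrite /fchar hq -(prednK n_gt0) pdiv_pfactor.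
by rewrite /fdeg hp.
Qed.

Lemma fdeg_gt0 (K : finFieldType) : (0 < fdeg K)%N.
Proof.
have [pr _ hq] := fchar_facts K.
case: (fdeg K) hq => // h; have := finNzRing_gt1 K; by rewrite h.
Qed.

Lemma natr_inj_lt (K : finFieldType) a b :
  (a < fchar K)%N -> (b < fchar K)%N -> a%:R = b%:R :> K -> a = b.
Proof.
have [pr pc _] := fchar_facts K.
wlog ab : a b / (a <= b)%N.
  move=> H ha hb e; case: (leqP a b) => h; first exact: H.
  by apply/esym/H => //; apply: ltnW.
move=> ha hb e.
have : (fchar K %| b - a)%N by rewrite (GRing.dvdn_pcharf pc) natrB // e subrr.
move=> hd; apply/eqP; rewrite eqn_leq ab /=.
have := dvdn_leq; case: (ltnP 0 (b - a)) => h0.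
  move=> /(_ _ _ h0 hd) h; have : (b - a < fchar K)%N by apply: leq_ltn_trans (leq_subr _ _) hb.
  by rewrite ltnNge h.
by move=> _; rewrite -subn_eq0 -leqn0.
Qed.

Lemma trace_add (K : finFieldType) (x y : K) : ftrace (x + y) = ftrace x + ftrace y.
Proof.
have [pr pc _] := fchar_facts K.
rewrite /ftrace -big_split; apply: eq_bigr => i _; apply: exprDn_pchar.
by rewrite pnatX (pnatE _ pr) pc.
Qed.

Lemma trace_frob (K : finFieldType) (x : K) : ftrace x ^+ fchar K = ftrace x.
Proof.
have [pr pc hq] := fchar_facts K.
have := fdeg_gt0 K; rewrite /ftrace; case E: (fdeg K) => [|n] // _.
have -> : (\sum_(i < n.+1) x ^+ (fchar K ^ i)) ^+ fchar K
       = pFrobenius_aut pc (\sum_(i < n.+1) x ^+ (fchar K ^ i)) by [].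
rewrite rmorph_sum big_ord_recr big_ord_recl /=.
rewrite [RHS]addrC; congr (_ + _).
  by apply: eq_bigr => i _; rewrite pFrobenius_autE -exprM expnSr.
by rewrite pFrobenius_autE -exprM -expnSr -E -hq expf_card expn0 expr1.
Qed.

Lemma prime_field (K : finFieldType) (t : K) :
  t ^+ fchar K = t -> exists2 k, (k < fchar K)%N & t = k%:R.
Proof.
have [pr pc _] := fchar_facts K.
move=> ht.
case: (boolP [exists k : 'I_(fchar K), t == (val k)%:R]).
  by case/existsP => k /eqP ->; exists (val k); [exact: ltn_ord|].
move=> /existsPn no; exfalso.
pose P : {poly K} := 'X^(fchar K) - 'X.
have szP : size P = (fchar K).+1.
  rewrite /P size_polyDl size_polyXn // size_polyN size_polyX ltnS; exact: prime_gt1.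
have P0 : P != 0 by rewrite -size_poly_eq0 szP.
pose rs := t :: map (fun k : 'I_(fchar K) => (val k)%:R : K) (enum 'I_(fchar K)).
have szr : size rs = (fchar K).+1 by rewrite /= size_map size_enum_ord.
have h1 : all (root P) rs.
  rewrite /= rootE /P !hornerE ht subrr eqxx /=.
  apply/allP => y /mapP [k _ ->]; rewrite rootE !hornerE.
  have -> : (val k)%:R ^+ fchar K = pFrobenius_aut pc (val k)%:R :> K by [].
  by rewrite rmorph_nat subrr.
have h2 : uniq rs.
  rewrite /= map_inj_uniq ?enum_uniq ?andbT.
    by apply/mapP => [[k _ e]]; have := no k; rewrite e eqxx.
  move=> i j /(@natr_inj_lt K _ _ (ltn_ord i) (ltn_ord j)); exact: val_inj.
by have := max_poly_roots P0 h1 h2; rewrite szP szr ltnn.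
Qed.

Lemma trace_nonzero (K : finFieldType) : exists x : K, ftrace x != 0.
Proof.
have [pr pc hq] := fchar_facts K.
have p1 := prime_gt1 pr.
case: (boolP [exists x : K, ftrace x != 0]); first by move/existsP.
move=> /existsPn no; exfalso.
have := fdeg_gt0 K; case E: (fdeg K) => [|n] // _.
pose S : {poly K} := \sum_(i < n) 'X^(fchar K ^ i).
pose T : {poly K} := S + 'X^(fchar K ^ n).
have szT : size T = (fchar K ^ n).+1.
  rewrite /T addrC size_polyDl size_polyXn //.
  apply: leq_ltn_trans (size_sum _ _ _) _; rewrite ltnS.
  by apply/bigmax_leqP => i _; rewrite size_polyXn ltn_exp2l.
have T0 : T != 0 by rewrite -size_poly_eq0 szT.
have h1 : all (root T) (enum K).
  apply/allP => x _; have e := eqP (negbNE (no x)).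
  rewrite /ftrace E big_ord_recr in e.
  rewrite rootE /T hornerD horner_sum hornerXn -[X in _ == X]e; apply/eqP; congr (_ + _).
  by apply: eq_bigr => i _; rewrite hornerXn.
have := max_poly_roots T0 h1 (enum_uniq _).
by rewrite szT -cardE hq E ltnS leqNgt ltn_exp2l // ltnSn.
Qed.

Lemma pow_coprime1 (R : pzRingType) (z : R) m n :
  (0 < m)%N -> coprime m n -> z ^+ m = 1 -> z ^+ n = 1 -> z = 1.
Proof.
move=> m0 cop zm zn; case: (egcdnP n m0) => km kn e _.
rewrite (eqnP cop) in e.
have : z ^+ (km * m) = z ^+ (kn * n + 1) by rewrite e.
by rewrite exprD expr1 mulnC exprM zm expr1n mulnC exprM zn expr1n mul1r.
Qed.

Lemma zeta_facts p : prime p -> zeta p ^+ p = 1 /\ zeta p != 1.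
Proof.
move=> pr; have p0 := prime_gt0 pr; have p1 := prime_gt1 pr.
set r := p.-root (-1 : algC).
have rp : r ^+ p = -1 by rewrite /r rootCK.
split; first by rewrite /zeta -/r exprAC rp sqrrN expr1n.
rewrite /zeta -/r sqrf_eq1; apply/norP; split.
  apply/eqP => r1; move: rp; rewrite r1 expr1n => /eqP.
  by rewrite -subr_eq0 opprK -mulr2n pnatr_eq0.
apply/eqP => rN; have := rootC_lt0 (-1 : algC) p1; rewrite -/r rN ltrN10.
by [].
Qed.

Lemma zeta_ne1 p k : prime p -> (0 < k < p)%N -> zeta p ^+ k != 1.
Proof.
move=> pr /andP [k0 kp]; have [zp z1] := zeta_facts pr.
apply: contra z1 => /eqP zk; apply/eqP; apply: (@pow_coprime1 _ _ k p k0 _ zk zp).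
rewrite coprime_sym prime_coprime //; apply/negP => /(dvdn_leq k0).
by rewrite leqNgt kp.
Qed.

Lemma rep_spec (K : finFieldType) (x : K) :
  (prime_rep (ftrace x) < fchar K)%N /\ (prime_rep (ftrace x))%:R = ftrace x.
Proof.
have [k kp ek] := prime_field (trace_frob x).
rewrite /prime_rep; case: pickP => [k' /eqP e | none].
  by split; [exact: ltn_ord | exact: e].
by have := none (Ordinal kp); rewrite /= ek eqxx.
Qed.

Lemma psi_add (K : finFieldType) (x y : K) : psiK (x + y) = psiK x * psiK y.
Proof.
have [pr pc _] := fchar_facts K.
have [zp _] := zeta_facts pr.
rewrite /psiK -exprD -[in RHS](expr_mod _ zp); congr (_ ^+ _).
have [m1 m2] := rep_spec (x + y); have [i1 i2] := rep_spec x; have [j1 j2] := rep_spec y.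
apply: (@natr_inj_lt K) => //; first exact: ltn_pmod (prime_gt0 pr).
by rewrite (GRing.natr_mod_pchar pc) natrD m2 i2 j2 trace_add.
Qed.

Lemma psi0 (K : finFieldType) : psiK (0 : K) = 1.
Proof.
have [pr pc _] := fchar_facts K.
have t0 : ftrace (0 : K) = 0.
  have := trace_add (0 : K) 0; rewrite addr0 => /(congr1 (fun z => z - ftrace (0 : K))).
  by rewrite subrr addrK.
have [r1 r2] := rep_spec (0 : K).
rewrite /psiK (_ : prime_rep _ = 0%N) //.
apply: (@natr_inj_lt K) => //; first exact: prime_gt0.
by rewrite r2 t0.
Qed.

Lemma psi_nontriv (K : finFieldType) : exists x : K, psiK x != 1.
Proof.
have [pr pc _] := fchar_facts K.
have [x tx] := trace_nonzero K; exists x.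
have [r1 r2] := rep_spec x.
apply: zeta_ne1 => //; rewrite r1 andbT lt0n; apply: contra tx => /eqP e.
by rewrite -r2 e.
Qed.

Lemma sum_psi (K : finFieldType) : \sum_(x : K) psiK x = 0.
Proof.
have [x0 h] := psi_nontriv K.
set S := \sum_x _.
have e : S = S * psiK x0.
  rewrite {1}/S (reindex_inj (addIr x0)) /S mulr_suml; apply: eq_bigr => x _.
  by rewrite /= psi_add.
apply/eqP; move: e => /eqP; rewrite -subr_eq0 -{1}(mulr1 S) -mulrBr mulf_eq0.
by rewrite subr_eq0 [1 == _]eq_sym (negbTE h) orbF.
Qed.

Lemma sum_psi_mul (K : finFieldType) (c : K) : c != 0 -> \sum_(x : K) psiK (c * x) = 0.
Proof.
move=> c0; transitivity (\sum_(x : K) psiK x); last exact: sum_psi.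
by rewrite [RHS](reindex_inj (mulfI c0)).
Qed.

Lemma pow_inj (K : finFieldType) d :
  (0 < d)%N -> coprime d #|K|.-1 -> injective (fun x : K => x ^+ d).
Proof.
move=> d0 cop x y e; have {}e : x ^+ d = y ^+ d := e.
have q1 := finNzRing_gt1 K.
have [y0e|y0] := eqVneq y 0.
  by move: e; rewrite y0e expr0n (gtn_eqF d0) => /eqP; rewrite expf_eq0 d0 /= => /eqP.
have x0 : x != 0.
  apply: contra y0 => /eqP x0; move: e; rewrite x0 expr0n (gtn_eqF d0) => /esym/eqP.
  by rewrite expf_eq0 d0.
set z := x / y.
have z0 : z != 0 by rewrite mulf_neq0 ?invr_eq0.
have zd : z ^+ d = 1 by rewrite /z expr_div_n e divff // expf_neq0.
have zq : z ^+ #|K|.-1 = 1.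
  apply: (mulfI z0); rewrite -exprS prednK ?expf_card ?mulr1 //; exact: ltnW.
have z1 := pow_coprime1 d0 cop zd zq.
by rewrite -(divfK y0 x) -/z z1 mul1r.
Qed.

Lemma sum_psi_pow (K : finFieldType) d (c : K) :
  (0 < d)%N -> coprime d #|K|.-1 -> c != 0 -> \sum_(x : K) psiK (c * x ^+ d) = 0.
Proof.
move=> d0 cop c0; transitivity (\sum_(x : K) psiK (c * x)); last exact: sum_psi_mul.
by rewrite [RHS](reindex_inj (pow_inj d0 cop)).
Qed.

Lemma char2_of_even (K : finFieldType) : ~~ odd #|K| -> 2%N \in [pchar K].
Proof.
have [pr pc hq] := fchar_facts K.
move=> ev; have : (2 %| fchar K ^ fdeg K)%N by rewrite -hq dvdn2.
rewrite Euclid_dvdX // dvdn_prime2 // => /andP [/eqP e _]; by rewrite e.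
Qed.

Lemma neg1_pow (K : finFieldType) d : coprime d #|K|.-1 -> (-1 : K) ^+ d = -1.
Proof.
move=> cop; rewrite -signr_odd; case: (boolP (odd d)) => od //=.
have q1 := finNzRing_gt1 K.
have ev : ~~ odd #|K|.
  apply/negP => oq.
  have h2d : (2 %| d)%N by rewrite dvdn2.
  have h2q : (2 %| #|K|.-1)%N.
    by rewrite dvdn2; move: oq; rewrite -{1}(prednK (ltnW q1)) /=; case: odd.
  have : (2 %| gcdn d #|K|.-1)%N by rewrite dvdn_gcd h2d h2q.
  by move/eqP: cop => ->.
by rewrite expr0 (oppr_pchar2 (char2_of_even ev)).
Qed.

From mathcomp Require Import ring.

Lemma sum_nz (K : finFieldType) (z : K) :
  \sum_(a : K | a != 0) psiK (a * z) = (if z == 0 then #|K|%:R else 0) - 1.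
Proof.
have full : \sum_(a : K) psiK (a * z) = (if z == 0 then #|K|%:R else 0).
  case: eqP => [->|/eqP z0].
    under eq_bigr do rewrite mulr0 psi0.
    by rewrite sumr_const.
  under eq_bigr do rewrite mulrC.
  exact: sum_psi_mul.
by rewrite -full [in RHS](bigD1 0) //= mul0r psi0 addrC addrK.
Qed.



Lemma main_expand (K : finFieldType) d (b : K) :
  \sum_(a : K | a != 0) WKd d a * WKd d (b * a) =
  #|K|%:R * \sum_(y : K) psiK ((- (b * y)) ^+ d + y ^+ d)
  - \sum_(x : K) \sum_(y : K) psiK (x ^+ d + y ^+ d).
Proof.
have step1 : forall a : K, WKd d a * WKd d (b * a) =
   \sum_(x : K) \sum_(y : K) psiK (x ^+ d + y ^+ d) * psiK (a * (x + b * y)).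
  move=> a; rewrite /WKd mulr_suml; apply: eq_bigr => x _.
  rewrite mulr_sumr; apply: eq_bigr => y _; rewrite -!psi_add; congr psiK; ring.
rewrite (eq_bigr _ (fun a _ => step1 a)) exchange_big /=.
under eq_bigr => x _ do rewrite exchange_big /=.
have inner : forall x y : K,
  \sum_(a | a != 0) psiK (x ^+ d + y ^+ d) * psiK (a * (x + b * y)) =
  psiK (x ^+ d + y ^+ d) * (if x + b * y == 0 then #|K|%:R else 0) - psiK (x ^+ d + y ^+ d).
  by move=> x y; rewrite -mulr_sumr sum_nz mulrBr mulr1.
rewrite (eq_bigr _ (fun x _ => eq_bigr _ (fun y _ => inner x y))).
rewrite (eq_bigr _ (fun x _ => sumrB _ _ _ _)) sumrB; congr (_ - _).
rewrite exchange_big mulr_sumr; apply: eq_bigr => y _.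
rewrite (bigD1 (- (b * y))) // addNr eqxx big1.
  by rewrite [_ _ 0]addr0 mulrC.
by move=> x hx; rewrite addr_eq0 (negbTE hx) mulr0.
Qed.

Unset Implicit Arguments.
Theorem lemma5p6 (K : finFieldType) (d : nat) :
  coprime d #|K|.-1 ->
  forall b : K, b != 1 ->
  \sum_(a : K | a != 0) WKd d a * WKd d (b * a) = 0.
Proof.
move=> cop b b1; rewrite main_expand.
case: (posnP d) => [d0|dpos].
  rewrite d0.
  under eq_bigr do rewrite !expr0.

  by rewrite !sumr_const mulr_natl subrr.
have -> : \sum_(x : K) \sum_(y : K) psiK (x ^+ d + y ^+ d) = 0.
  under eq_bigr do under eq_bigr do rewrite psi_add.
  under eq_bigr do rewrite -mulr_sumr.
  rewrite -mulr_suml.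
  have -> : \sum_(y : K) psiK (y ^+ d) = 0.
    under eq_bigr => y _ do rewrite -[y ^+ d]mul1r.
    by rewrite sum_psi_pow ?oner_eq0.
  by rewrite mulr0.
set c := (- b) ^+ d + 1.
have c0 : c != 0.
  apply/eqP => /eqP; rewrite /c addr_eq0 -(neg1_pow cop) => /eqP e.
  move/eqP: b1; apply; apply: oppr_inj; exact: (pow_inj dpos cop e).
have -> : \sum_(y : K) psiK ((- (b * y)) ^+ d + y ^+ d) = \sum_(y : K) psiK (c * y ^+ d).
  by apply: eq_bigr => y _; rewrite /c mulrDl mul1r -mulNr exprMn.
by rewrite sum_psi_pow // mulr0 subrr.
Qed.
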